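(* Let $(\mathcal G,(\cdot,\cdot),\mathcal H)$ be a generalized reductive Lie algebra with root system $R$ and let $\dot{\mathcal H}_1,\dots,\dot{\mathcal H}_k$, $\mathcal H(R)$, $\mathcal H^0(R)$ be as in the context. Then (i) the form $(\cdot,\cdot)$ restricted to each $\dot{\mathcal H}_i$ is nondegenerate; (ii) $\mathcal H(R)=\mathcal H^0(R)\oplus\big(\bigoplus_{i=1}^k\dot{\mathcal H}_i\big)$; (iii) $\mathcal H^0(R)=\mathrm{span}_{\mathbb C}\{t_\delta:\delta\in R^0\}$.
   Context: GRLA: $\mathcal G$ complex Lie algebra, $\mathcal H$ subalgebra, $(\cdot,\cdot)$ bilinear form with (GR1) form symmetric, nondegenerate, invariant; (GR2) $\mathcal H$ nontrivial finite-dimensional abelian, self-centralizing, $\mathrm{ad}(h)$ diagonalizable; root spaces $\mathcal G_\alpha$, root system $R=\{\alpha\in\mathcal H^*:\mathcal G_\alpha\ne0\}$; $t_\alpha\in\mathcal H$ with $(t_\alpha,h)=\alpha(h)$, $(\alpha,\beta):=(t_\alpha,t_\beta)$; $R^\times=\{\alpha:(\alpha,\alpha)\ne0\}$, $R^0=R\setminus R^\times$; (GR3) $\mathrm{ad}(x)$ locally nilpotent for $x\in\mathcal G_\alpha$, $\alpha\in R^\times$; (GR4) $R$ discrete; (GR5) $R^\times\neq\emptyset$. Let $R^\times=R^\times_1\cup\dots\cup R^\times_k$ be the partition into classes of the equivalence relation generated by $\alpha\sim\beta$ if $(\alpha,\beta)\ne0$. Let $\mathcal V$ be the real span of $R$,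 $\mathcal V^0=\{v\in\mathcal V:(v,\mathcal V)=0\}$, $\bar{\ }:\mathcal V\to\mathcal V/\mathcal V^0$, $\bar{\mathcal V}_i$ the image of the real span of $R_i^\times$ and $\bar R_i=\{\bar\alpha:\alpha\in R_i^\times\}\cup\{0\}$; for suitable $c_i\neq0$, $\bar R_i$ is an irreducible finite root system in $\bar{\mathcal V}_i$ with respect to $c_i(\cdot,\cdot)$. Choose a base $\{\bar\alpha_{i1},\dots,\bar\alpha_{i\ell_i}\}$ of $\bar R_i$, preimages $\alpha_{ij}\in R_i^\times$, let $\dot{\mathcal V}_i$ be their real span and $\dot R_i=\{\alpha\in\dot{\mathcal V}_i:\bar\alpha\in\bar R_i\}$. Set $\dot{\mathcal H}_i=\mathrm{span}_{\mathbb C}\{t_\alpha:\alpha\in\dot R_i\}$, $\mathcal H(R)=\mathrm{span}_{\mathbb C}\{t_\alpha:\alpha\in R\}$ and $\mathcal H^0(R)=\{h\in\mathcal H(R):(h,\mathcal H(R))=\{0\}\}$. *)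

(* Defs.v *)
From HB Require Import structures.
From mathcomp Require Import all_boot all_order all_algebra.
From mathcomp Require Import reals complex.
From Stdlib Require Import Relations.
Set Implicit Arguments. Unset Strict Implicit. Unset Printing Implicit Defensive.
Import Order.TTheory GRing.Theory Num.Theory.
Local Open Scope ring_scope.
Local Open Scope complex_scope.

Section GRLA.
Variable R : realType.
Local Notation C := R[i].
(* G : a complex vector space (possibly infinite dimensional) *)
Variable V : lmodType C.
(* H : a finite dimensional complex space, embedded in G by iota *)
Variable Hs : vectType C.
Local Notation Hd := 'Hom(Hs, C^o).

Variables (br : V -> V -> V) (bf : V -> V -> C) (iota : {linear Hs -> V})
          (t : Hd -> Hs).

(* br is a Lie bracket (bilinearity in the 2nd argument follows from
   linearity in the first and alternation) *)
Definition lie_bracket : Prop :=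
  [/\ forall (a : C) x y z, br (a *: x + y) z = a *: br x z + br y z,
      forall x, br x x = 0 &
      forall x y z, br x (br y z) + br y (br z x) + br z (br x y) = 0].

Definition GR1 : Prop :=
  [/\ forall (a : C) x y z, bf (a *: x + y) z = a * bf x z + bf y z,
      forall x y, bf x y = bf y x,
      forall x, (forall y, bf x y = 0) -> x = 0 &
      forall x y z, bf (br x y) z = bf x (br y z)].

Definition root_space (a : Hd) (x : V) : Prop :=
  forall h : Hs, br (iota h) x = a h *: x.

Definition is_root (a : Hd) : Prop := exists x, root_space a x /\ x <> 0.

Definition GR2 : Prop :=
  [/\ injective iota,
      (0 < \dim (fullv : {vspace Hs}))%N,
      forall h h', br (iota h) (iota h') = 0,
      forall x, (forall h, br (iota h) x = 0) -> exists h, x = iota h &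
      forall x, exists s : seq (Hd * V),
        (forall p, p \in s -> root_space p.1 p.2) /\ x = \sum_(p <- s) p.2].

Definition is_t : Prop := forall (a : Hd) (h : Hs), bf (iota (t a)) (iota h) = a h.

Definition fH (a b : Hd) : C := bf (iota (t a)) (iota (t b)).

Definition Rx (a : Hd) : Prop := is_root a /\ fH a a <> 0.
Definition R0 (a : Hd) : Prop := is_root a /\ fH a a = 0.

Definition GR3 : Prop :=
  forall a, Rx a -> forall x, root_space a x ->
    forall y, exists n : nat, iter n (br x) y = 0.

(* (GR4): R is discrete in H^* (sup-norm w.r.t. coordinates on a basis of H) *)
Definition GR4 : Prop :=
  forall a, is_root a -> exists e : R, 0 < e /\
    forall b, is_root b -> b <> a ->
      exists i : 'I_(\dim (fullv : {vspace Hs})),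
        e%:C <= `| b (tnth (vbasis fullv) i) - a (tnth (vbasis fullv) i) |.

Definition GR5 : Prop := exists a, Rx a.

Definition GRLA : Prop := [/\ lie_bracket, GR1, GR2, GR3 & GR4 /\ GR5].

Definition rootrel (a b : Hd) : Prop := [/\ Rx a, Rx b & fH a b <> 0].
Definition rootequiv : Hd -> Hd -> Prop := clos_refl_trans Hd rootrel.

(* cls enumerates (bijectively) the k equivalence classes R^x_1, ..., R^x_k *)
Definition root_partition (k : nat) (cls : 'I_k -> Hd -> Prop) : Prop :=
  [/\ forall i, exists a, cls i a,
      forall i a, cls i a -> Rx a,
      forall a, Rx a -> exists i, cls i a,
      forall i a b, cls i a -> (cls i b <-> rootequiv a b) &
      forall i j a, cls i a -> cls j a -> i = j].

Definition rspan (P : Hd -> Prop) (v : Hd) : Prop :=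
  exists s : seq (R * Hd), (forall p, p \in s -> P p.2) /\
    v = \sum_(p <- s) ((p.1)%:C *: p.2).

Definition cspan (P : Hd -> Prop) (h : Hs) : Prop :=
  exists s : seq (C * Hd), (forall p, p \in s -> P p.2) /\
    h = \sum_(p <- s) (p.1 *: t p.2).

(* V = real span of R ; V^0 its radical *)
Definition Vsp : Hd -> Prop := rspan is_root.
Definition V0 (v : Hd) : Prop := Vsp v /\ forall w, Vsp w -> fH v w = 0.

(* al : 'I_l -> Hd are preimages in R^x_i of a base {bar al_j} of
   bar R_i = {bar a : a \in R^x_i} \cup {0} \subseteq V/V^0 :
   the bar al_j are R-linearly independent in V/V^0 and every element of
   bar R_i is an integral combination of them with coefficients all of the
   same sign. (bar a = bar b iff a - b \in V^0.) *)
Definition is_base (clsi : Hd -> Prop) (l : nat) (al : 'I_l -> Hd) : Prop :=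
  [/\ forall j, clsi (al j),
      forall r : 'I_l -> R, V0 (\sum_j ((r j)%:C *: al j)) -> forall j, r j = 0 &
      forall b, clsi b -> exists z : 'I_l -> int,
        ((forall j, (0 <= z j)%R) \/ (forall j, (z j <= 0)%R)) /\
        V0 (b - \sum_j ((z j)%:~R *: al j))].

(* dot R_i = {a \in dot V_i : bar a \in bar R_i} *)
Definition dotR (clsi : Hd -> Prop) (l : nat) (al : 'I_l -> Hd) (b : Hd) : Prop :=
  rspan (fun a => exists j, a = al j) b /\
  (V0 b \/ exists a, clsi a /\ V0 (b - a)).

Definition dotH (clsi : Hd -> Prop) (l : nat) (al : 'I_l -> Hd) : Hs -> Prop :=
  cspan (dotR clsi al).

Definition HR : Hs -> Prop := cspan is_root.
Definition H0R (h : Hs) : Prop :=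
  HR h /\ forall h', HR h' -> bf (iota h) (iota h') = 0.

End GRLA.

(* Main.v *)
Require Import Defs.
From HB Require Import structures.
From mathcomp Require Import all_boot all_order all_algebra.
From mathcomp Require Import reals complex.
From Stdlib Require Import Relations Classical.
From mathcomp Require Import ring lra.
Set Implicit Arguments. Unset Strict Implicit. Unset Printing Implicit Defensive.
Import Order.TTheory GRing.Theory Num.Theory.
Local Open Scope ring_scope.

Section SL2.
Variable R : realType.
Local Notation C := R[i].
Variable V : lmodType C.

Lemma first_zero (f : V -> V) v n : v != 0 -> iter n f v = 0 ->
  exists m, iter m f v != 0 /\ iter m.+1 f v = 0.
Proof.
move=> vn0; elim: n => [|n IH] /=; first by move=> e; move: vn0; rewrite e eqxx.
case: (eqVneq (iter n f v) 0) => [/IH //|hn e]; by exists n.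
Qed.

Lemma sl2_low (E F Hh : V -> V) (EZ : forall c x, E (c *: x) = c *: E x) (FZ : forall c x, F (c *: x) = c *: F x)
  (EF : forall x, E (F x) = F (E x) + Hh x)
  (HF : forall x, Hh (F x) = F (Hh x) - 2%:R *: F x)
  v mu (Ev : E v = 0) (Hv : Hh v = mu *: v) M
  (nz : iter M F v != 0) (z : iter M.+1 F v = 0) : mu = M%:R.
Proof.
have F0 : F 0 = 0 by rewrite -(scale0r 0) FZ !scale0r.
have E0 : E 0 = 0 by rewrite -(scale0r 0) EZ !scale0r.
have keyH : forall k, Hh (iter k F v) = (mu - 2%:R * k%:R) *: iter k F v.
  elim=> [|k IH1] /=; first by rewrite mulr0 subr0 Hv.
  by rewrite HF IH1 FZ -scalerBl; congr (_ *: _); rewrite mulrSr; ring.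
have key : forall k, E (iter k.+1 F v) = (k.+1%:R * (mu - k%:R)) *: iter k F v.
  elim=> [|k IH2].
    by rewrite /= EF Ev F0 add0r subr0 mul1r Hv.
  have -> : iter k.+2 F v = F (iter k.+1 F v) by [].
  rewrite EF IH2 FZ (keyH k.+1) -scalerDl; congr (_ *: _).
  rewrite !mulrSr; ring.
have := key M; rewrite z E0 => /esym /eqP; rewrite scaler_eq0 (negbTE nz) orbF.
rewrite mulf_eq0 pnatr_eq0 /= subr_eq0 => /eqP //.
Qed.

Lemma sl2_int (E F Hh : V -> V) (EZ : forall c x, E (c *: x) = c *: E x)
  (FZ : forall c x, F (c *: x) = c *: F x)
  (EF : forall x, E (F x) = F (E x) + Hh x)
  (HF : forall x, Hh (F x) = F (Hh x) - 2%:R *: F x)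
  (HE : forall x, Hh (E x) = E (Hh x) + 2%:R *: E x)
  v lam (vn0 : v != 0) (Hv : Hh v = lam *: v)
  (En : exists n, iter n E v = 0) (Fn : forall y, exists n, iter n F y = 0) :
  exists M m : nat, lam = M%:R - 2%:R * m%:R.
Proof.
have keyH : forall k, Hh (iter k E v) = (lam + 2%:R * k%:R) *: iter k E v.
  elim=> [|k IH1] /=; first by rewrite mulr0 addr0 Hv.
  by rewrite HE IH1 EZ -scalerDl; congr (_ *: _); rewrite mulrSr; ring.
case: En => n hn; have [m [wn0 Ew]] := first_zero vn0 hn.
case: (Fn (iter m E v)) => n' hn'; have [M [h1 h2]] := first_zero wn0 hn'.
have := sl2_low EZ FZ EF HF Ew (keyH m) h1 h2 => e.
exists M, m; rewrite -e; ring.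
Qed.

Lemma sl2_pos (E F Hh : V -> V) (EZ : forall c x, E (c *: x) = c *: E x)
  (FZ : forall c x, F (c *: x) = c *: F x)
  (EF : forall x, E (F x) = F (E x) + Hh x)
  (HE : forall x, Hh (E x) = E (Hh x) + 2%:R *: E x)
  v lam (vn0 : v != 0) (Hv : Hh v = lam *: v) (Fv : F v = 0)
  (En : exists n, iter n E v = 0) : exists K : nat, lam = - K%:R.
Proof.
case: En => n hn; have [K [h1 h2]] := first_zero vn0 hn.
have EN x : E (- x) = - E x by rewrite -scaleN1r EZ scaleN1r.
have a1 : forall x, F (E x) = E (F x) + - Hh x by move=> x; rewrite EF addrK.
have a2 : forall x, - Hh (E x) = E (- Hh x) - 2%:R *: E x by move=> x; rewrite HE EN opprD.
have a3 : - Hh v = (- lam) *: v by rewrite Hv scaleNr.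
have e := @sl2_low F E (fun x => - Hh x) FZ EZ a1 a2 v (- lam) Fv a3 K h1 h2.
by exists K; rewrite -e opprK.
Qed.
End SL2.

Section Basics.
Local Open Scope complex_scope.
Variable R : realType.
Local Notation C := R[i].
Variable V : lmodType C.
Variable Hs : vectType C.
Local Notation Hd := 'Hom(Hs, C^o).
Variables (br : V -> V -> V) (bf : V -> V -> C) (iota : {linear Hs -> V})
          (t : Hd -> Hs).
Variable Hlie : lie_bracket br.
Variable HG1 : GR1 br bf.
Variable HG2 : GR2 br iota.
Variable Ht : is_t bf iota t.

Lemma bfDl x y z : bf (x + y) z = bf x z + bf y z.
Proof. by case: HG1 => H _ _ _; have := H 1 x y z; rewrite scale1r mul1r. Qed.
Lemma bf0l z : bf 0 z = 0.
Proof. case: HG1 => H _ _ _; have h := H 1 0 0 z; rewrite scale1r addr0 mul1r in h.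
by apply: (addrI (bf 0 z)); rewrite addr0 -h. Qed.
Lemma bfZl a x z : bf (a *: x) z = a * bf x z.
Proof. by case: HG1 => H _ _ _; have := H a x 0 z; rewrite addr0 bf0l addr0. Qed.
Lemma bfC x y : bf x y = bf y x.
Proof. by case: HG1 => _ H _ _; apply: H. Qed.
Lemma bfDr x y z : bf z (x + y) = bf z x + bf z y.
Proof. by rewrite bfC bfDl !(bfC z). Qed.
Lemma bfZr a x z : bf z (a *: x) = a * bf z x.
Proof. by rewrite bfC bfZl bfC. Qed.
Lemma bf0r z : bf z 0 = 0.
Proof. by rewrite bfC bf0l. Qed.
Lemma bfNl x z : bf (- x) z = - bf x z.
Proof. by rewrite -scaleN1r bfZl mulN1r. Qed.
Lemma bfNr x z : bf z (- x) = - bf z x.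
Proof. by rewrite bfC bfNl bfC. Qed.
Lemma bfBl x y z : bf (x - y) z = bf x z - bf y z.
Proof. by rewrite bfDl bfNl. Qed.
Lemma bfBr x y z : bf z (x - y) = bf z x - bf z y.
Proof. by rewrite bfDr bfNr. Qed.
Lemma bf_suml I (r : seq I) (F : I -> V) z : bf (\sum_(i <- r) F i) z = \sum_(i <- r) bf (F i) z.
Proof. elim: r => [|a r IH]; rewrite ?big_nil ?bf0l // !big_cons bfDl IH //. Qed.
Lemma bf_sumr I (r : seq I) (F : I -> V) z : bf z (\sum_(i <- r) F i) = \sum_(i <- r) bf z (F i).
Proof. rewrite bfC bf_suml; apply: eq_bigr => i _; exact: bfC. Qed.
Lemma bf_nondeg x : (forall y, bf x y = 0) -> x = 0.
Proof. by case: HG1 => _ _ H _; apply: H. Qed.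
Lemma bf_inv x y z : bf (br x y) z = bf x (br y z).
Proof. by case: HG1 => _ _ _ H; apply: H. Qed.

Lemma brDl x y z : br (x + y) z = br x z + br y z.
Proof. by case: Hlie => H _ _; have := H 1 x y z; rewrite !scale1r. Qed.
Lemma br0l z : br 0 z = 0.
Proof. case: Hlie => H _ _; have h := H 1 0 0 z; rewrite !scale1r addr0 in h.
by apply: (addrI (br 0 z)); rewrite addr0 -h. Qed.
Lemma brZl a x z : br (a *: x) z = a *: br x z.
Proof. by case: Hlie => H _ _; have := H a x 0 z; rewrite addr0 br0l addr0. Qed.
Lemma brDr x y z : br z (x + y) = br z x + br z y.
Proof. apply/subr0_eq/bf_nondeg => w.
by rewrite bfBl bfDl !bf_inv !brDl bfDr subrr. Qed.
Lemma brZr a x z : br z (a *: x) = a *: br z x.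
Proof. apply/subr0_eq/bf_nondeg => w.
by rewrite bfBl bfZl !bf_inv brZl bfZr subrr. Qed.
Lemma brxx x : br x x = 0.
Proof. by case: Hlie => _ H _; apply: H. Qed.
Lemma br0r z : br z 0 = 0.
Proof. by have := brZr 0 0 z; rewrite !scale0r. Qed.
Lemma brC x y : br y x = - br x y.
Proof. have := brxx (x + y); rewrite brDl !brDr !brxx add0r addr0 => /eqP.
by rewrite addr_eq0 => /eqP ->; rewrite opprK. Qed.
Lemma brNl x z : br (- x) z = - br x z.
Proof. by rewrite -scaleN1r brZl scaleN1r. Qed.
Lemma brNr x z : br z (- x) = - br z x.
Proof. by rewrite -scaleN1r brZr scaleN1r. Qed.
Lemma brBl x y z : br (x - y) z = br x z - br y z.
Proof. by rewrite brDl brNl. Qed.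
Lemma brBr x y z : br z (x - y) = br z x - br z y.
Proof. by rewrite brDr brNr. Qed.
Lemma brJ x y z : br x (br y z) = br (br x y) z + br y (br x z).
Proof.
case: Hlie => _ _ J; have h := J x y z.
rewrite (brC x z) brNr (brC (br x y) z) in h.
by apply/eqP; rewrite -subr_eq0 -h opprD addrA addrAC.
Qed.

Local Notation rs := (root_space br iota).

Lemma rs0 a : rs a 0.
Proof. by move=> h; rewrite br0r scaler0. Qed.
Lemma rsD a x y : rs a x -> rs a y -> rs a (x + y).
Proof. by move=> hx hy h; rewrite brDr hx hy scalerDr. Qed.
Lemma rsZ a c x : rs a x -> rs a (c *: x).
Proof. by move=> hx h; rewrite brZr hx !scalerA mulrC. Qed.
Lemma rsN a x : rs a x -> rs a (- x).
Proof. by move=> hx; rewrite -scaleN1r; apply: rsZ. Qed.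
Lemma rs_br a b x y : rs a x -> rs b y -> rs (a + b) (br x y).
Proof.
move=> hx hy h; rewrite brJ hx hy brZl brZr add_lfunE scalerDl //.
Qed.
Lemma rs_iota h : rs 0 (iota h).
Proof. case: HG2 => _ _ Hab _ _ h'; by rewrite Hab zero_lfunE scale0r. Qed.
Lemma rs0_iota x : rs 0 x -> exists h, x = iota h.
Proof. case: HG2 => _ _ _ Hc _ hx; apply: Hc => h; by rewrite hx zero_lfunE scale0r. Qed.
Lemma iota_inj : injective iota.
Proof. by case: HG2. Qed.
Lemma decomp x : exists s : seq (Hd * V),
        (forall p, p \in s -> rs p.1 p.2) /\ x = \sum_(p <- s) p.2.
Proof. by case: HG2 => _ _ _ _ H; apply: H. Qed.

Lemma lfun_neq0 (a : Hd) : a != 0 -> exists h, a h != 0.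
Proof.
move=> an0; apply/not_all_not_ex => H; move/eqP: an0; apply; apply/lfunP => h.
by rewrite zero_lfunE; have := H h; case: eqP.
Qed.

Lemma rs_orth a b x y : rs a x -> rs b y -> a + b != 0 -> bf x y = 0.
Proof.
move=> hx hy /lfun_neq0 [h]; rewrite add_lfunE => hn.
have e1 : bf (br x (iota h)) y = b h * bf x y by rewrite bf_inv hy bfZr.
rewrite brC hx bfNl bfZl in e1.
have : (a h + b h) * bf x y = 0 by rewrite mulrDl -e1 addrN.
by move/eqP; rewrite mulf_eq0 (negbTE hn) => /eqP.
Qed.

Lemma H_nondeg h : (forall h', bf (iota h) (iota h') = 0) -> h = 0.
Proof.
move=> H; apply: iota_inj; rewrite linear0; apply: bf_nondeg => y.
have [s [hs ->]] := decomp y; rewrite bf_sumr big1_seq // => p /andP [_ ps].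
case: (eqVneq p.1 0).
  by move=> e; have := hs _ ps; rewrite e => /rs0_iota [h' ->]; exact: H.
move=> n0; apply: (rs_orth (rs_iota h) (hs _ ps)); by rewrite add0r.
Qed.

Local Notation fH := (fH bf iota t).

Lemma bft a h : bf (iota (t a)) (iota h) = a h.
Proof. exact: Ht. Qed.

Lemma tD a b : t (a + b) = t a + t b.
Proof. apply/subr0_eq/H_nondeg => h.
by rewrite !linearB linearD /= bfBl bfDl !bft add_lfunE subrr. Qed.
Lemma tZ c a : t (c *: a) = c *: t a.
Proof. apply/subr0_eq/H_nondeg => h.
by rewrite !linearB linearZ /= bfBl bfZl !bft scale_lfunE subrr. Qed.
Lemma t0 : t 0 = 0.
Proof. by have := tZ 0 0; rewrite !scale0r. Qed.
Lemma tN a : t (- a) = - t a.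
Proof. by rewrite -scaleN1r tZ scaleN1r. Qed.
Lemma tB a b : t (a - b) = t a - t b.
Proof. by rewrite tD tN. Qed.
Lemma t_sum I (r : seq I) (F : I -> Hd) : t (\sum_(i <- r) F i) = \sum_(i <- r) t (F i).
Proof. elim: r => [|x r IH]; rewrite ?big_nil ?t0 // !big_cons tD IH //. Qed.
Lemma t_eq0 a : t a = 0 -> a = 0.
Proof. move=> e; apply/lfunP => h; by rewrite zero_lfunE -bft e linear0 bf0l. Qed.

Lemma fHE a b : fH a b = a (t b).
Proof. exact: Ht. Qed.
Lemma fHC a b : fH a b = fH b a.
Proof. exact: bfC. Qed.
Lemma fHDl a b c : fH (a + b) c = fH a c + fH b c.
Proof. by rewrite !fHE add_lfunE. Qed.
Lemma fHZl k a c : fH (k *: a) c = k * fH a c.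
Proof. by rewrite !fHE scale_lfunE. Qed.
Lemma fHNl a c : fH (- a) c = - fH a c.
Proof. by rewrite !fHE opp_lfunE. Qed.
Lemma fHBl a b c : fH (a - b) c = fH a c - fH b c.
Proof. by rewrite fHDl fHNl. Qed.
Lemma fH0l c : fH 0 c = 0.
Proof. by rewrite !fHE zero_lfunE. Qed.
Lemma fHDr a b c : fH c (a + b) = fH c a + fH c b.
Proof. by rewrite fHC fHDl !(fHC c). Qed.
Lemma fHZr k a c : fH c (k *: a) = k * fH c a.
Proof. by rewrite fHC fHZl fHC. Qed.
Lemma fHNr a c : fH c (- a) = - fH c a.
Proof. by rewrite fHC fHNl fHC. Qed.
Lemma fHBr a b c : fH c (a - b) = fH c a - fH c b.
Proof. by rewrite fHDr fHNr. Qed.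
Lemma fH0r c : fH c 0 = 0.
Proof. by rewrite fHC fH0l. Qed.
Lemma fH_suml I (r : seq I) (F : I -> Hd) c : fH (\sum_(i <- r) F i) c = \sum_(i <- r) fH (F i) c.
Proof. elim: r => [|x r IH]; rewrite ?big_nil ?fH0l // !big_cons fHDl IH //. Qed.
Lemma fH_sumr I (r : seq I) (F : I -> Hd) c : fH c (\sum_(i <- r) F i) = \sum_(i <- r) fH c (F i).
Proof. rewrite fHC fH_suml; apply: eq_bigr => i _; exact: fHC. Qed.

Lemma br_pair a x y : rs a x -> rs (- a) y -> br x y = iota (bf x y *: t a).
Proof.
move=> hx hy; have := rs_br hx hy; rewrite addrN => /rs0_iota [h0 e]; rewrite e; apply: (congr1 iota).
apply/subr0_eq/H_nondeg => h.
rewrite linearB linearZ /= bfBl bfZl bft -e bf_inv brC hy bfNr bfZr opp_lfunE.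
by rewrite mulNr opprK mulrC subrr.
Qed.

Lemma pair_exists a x : rs a x -> x != 0 -> exists y, rs (- a) y /\ bf x y = 1.
Proof.
move=> hx xn0.
have [z hz] : exists z, bf x z != 0.
  apply/not_all_not_ex => H; move/eqP: xn0; apply; apply: bf_nondeg => z.
  by have := H z; case: eqP.
have [s [hs ez]] := decomp z.
have : has (fun p => bf x p.2 != 0) s.
  apply/hasP; apply: NNPP => H; move: hz; rewrite ez bf_sumr big1_seq ?eqxx //.
  by move=> p /andP [_ ps]; case: (eqVneq (bf x p.2) 0) => // hn; case: H; exists p.
case/hasP => p ps hp.
have e : p.1 = - a.
  apply/eqP; rewrite -addr_eq0 addrC; apply/negP => /negP hn.
  by move/eqP: hp; apply; apply: rs_orth hx (hs _ ps) hn.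
exists ((bf x p.2)^-1 *: p.2); split.
  by apply: rsZ; rewrite -e; apply: hs.
by rewrite bfZr mulVf.
Qed.

Lemma rootN a : is_root br iota a -> is_root br iota (- a).
Proof.
case=> x [hx xn0]; have [y [hy e]] := pair_exists hx (introN eqP xn0).
exists y; split => // y0; move: e; rewrite y0 bf0r => /eqP; by rewrite eq_sym oner_eq0.
Qed.
Lemma fHNN a : fH (- a) (- a) = fH a a.
Proof. by rewrite fHNl fHNr opprK. Qed.
Lemma RxN a : Rx br bf iota t a -> Rx br bf iota t (- a).
Proof. by case=> r n; split; [apply: rootN | rewrite fHNN]. Qed.

Variable HG3 : GR3 br bf iota t.
Local Notation Rx := (Rx br bf iota t).
Local Notation is_root := (is_root br iota).

Lemma lfunZ (a : Hd) c h : a (c *: h) = c * a h.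
Proof. by rewrite linearZ. Qed.

Lemma sl2_setup a : Rx a -> exists e f, [/\ rs a e, rs (- a) f, e != 0 &
   br e f = iota ((2%:R / fH a a) *: t a)].
Proof.
case=> [[e [he en0]] fn0]; have en0' : e != 0 by apply/eqP.
have [f0 [hf0 e1]] := pair_exists he en0'.
exists e, ((2%:R / fH a a) *: f0); split => //; first exact: rsZ.
by rewrite brZr (br_pair he hf0) e1 scale1r linearZ.
Qed.

Lemma sl2_ops a : Rx a -> exists e f (Hh : V -> V), [/\ rs a e, rs (- a) f, e != 0,
  [/\ forall c x, br e (c *: x) = c *: br e x, forall c x, br f (c *: x) = c *: br f x,
      forall x, br e (br f x) = br f (br e x) + Hh x,
      forall x, Hh (br f x) = br f (Hh x) - 2%:R *: br f x &
      forall x, Hh (br e x) = br e (Hh x) + 2%:R *: br e x] &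
  forall b v, rs b v -> Hh v = ((2%:R / fH a a) * fH b a) *: v].
Proof.
move=> ha; have [e [f [he hf en0 ef]]] := sl2_setup ha.
have fa0 : fH a a != 0 by case: ha => _ /eqP.
set c := 2%:R / fH a a.
have ac : a (c *: t a) = 2%:R by rewrite lfunZ -fHE /c divfK.
exists e, f, (br (iota (c *: t a))); split => //.
  split.
  - by move=> ??; apply: brZr.
  - by move=> ??; apply: brZr.
  - by move=> x; rewrite brJ ef addrC.
  - by move=> x; rewrite brJ hf brZl opp_lfunE ac scaleNr addrC.
  - by move=> x; rewrite brJ he brZl ac addrC.
by move=> b v hv; rewrite hv lfunZ -fHE.
Qed.

Lemma integrality a b : Rx a -> is_root b ->
  exists M m : nat, 2%:R * fH b a = (M%:R - 2%:R * m%:R) * fH a a.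
Proof.
move=> ha [v [hv vn0]]; have [e [f [Hh [he hf en0 [EZ FZ EF HF HE] Hv]]]] := sl2_ops ha.
have fa0 : fH a a != 0 by case: ha => _ /eqP.
have En : exists n, iter n (br e) v = 0 := HG3 ha he v.
have Fn : forall y, exists n, iter n (br f) y = 0 := HG3 (RxN ha) hf.
have [M [m e1]] := sl2_int EZ FZ EF HF HE (introN eqP vn0) (Hv _ _ hv) En Fn.
exists M, m; rewrite -e1 mulrAC divfK //.
Qed.

Lemma one_step a b : Rx a -> is_root b ->
  (forall K : nat, 2%:R * fH b a != - K%:R * fH a a) -> is_root (b - a).
Proof.
move=> ha [v [hv vn0]] hK; have [e [f [Hh [he hf en0 [EZ FZ EF HF HE] Hv]]]] := sl2_ops ha.
have fa0 : fH a a != 0 by case: ha => _ /eqP.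
case: (eqVneq (br f v) 0) => [Fv|Fvn0].
  have En : exists n, iter n (br e) v = 0 := HG3 ha he v.
  have [K eK] := sl2_pos EZ FZ EF HE (introN eqP vn0) (Hv _ _ hv) Fv En.
  by move: (hK K); rewrite -eK mulrAC divfK // eqxx.
exists (br f v); split; last by apply/eqP.
by rewrite addrC; apply: rs_br.
Qed.

Lemma inv_int_bound (M m : nat) : (M%:R - 2%:R * m%:R : R) != 0 ->
  -1 <= (M%:R - 2%:R * m%:R : R)^-1 <= 1.
Proof.
have -> : (M%:R - 2%:R * m%:R : R) = M%:R - (2 * m)%:R by rewrite natrM.
move=> hn0; case: (ltngtP M (2 * m)) => hM.
- have h : ((M + 1)%:R <= (2 * m)%:R :> R) by rewrite ler_nat addn1.
  rewrite natrD in h.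
  have hx0 : (M%:R - (2 * m)%:R : R) < 0 by lra.
  apply/andP; split; last by apply: le_trans (ltW _) ler01; rewrite invr_lt0.
  have : (- (M%:R - (2 * m)%:R : R))^-1 <= 1 by rewrite invf_le1 ?oppr_gt0 //; lra.
  rewrite invrN; lra.
- have h : ((2 * m + 1)%:R <= M%:R :> R) by rewrite ler_nat addn1.
  rewrite natrD in h.
  have hx0 : (0 : R) < M%:R - (2 * m)%:R by lra.
  apply/andP; split; last by rewrite invf_le1 //; lra.
  have : (0 : R) < (M%:R - (2 * m)%:R)^-1 by rewrite invr_gt0.
  lra.
- by move: hn0; rewrite hM subrr eqxx.
Qed.

Lemma iso_orth d b : is_root d -> fH d d = 0 -> is_root b -> fH d b = 0.
Proof.
move=> hd dd hb; apply: NNPP => /eqP cn0.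
set c := fH d b in cn0.
have [x [hx xn0]] := hd.
have [y [hy exy]] := pair_exists hx (introN eqP xn0).
have xy : br x y = iota (t d) by rewrite (br_pair hx hy) exy scale1r.
pose g (j : int) := b + j%:~R *: d.
have gT : forall j w, rs (g j) w -> br (iota (t d)) w = c *: w.
  move=> j w hw; rewrite hw /g add_lfunE scale_lfunE -!fHE dd scaler0 addr0 fHC //.
have gx : forall j w, rs (g j) w -> rs (g (j + 1)) (br x w).
  move=> j w hw; suff -> : g (j + 1) = d + g j by apply: rs_br.
  by rewrite /g intrD mulr1z scalerDl scale1r addrA [LHS]addrC.
have gy : forall j w, rs (g j) w -> rs (g (j - 1)) (br y w).
  move=> j w hw; suff -> : g (j - 1) = - d + g j by apply: rs_br.
  by rewrite /g intrD mulrN1z scalerDl scaleN1r addrA [LHS]addrC.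
have gi : forall k j w, rs (g j) w -> rs (g (j + k%:Z)) (iter k (br x) w).
  elim=> [|k IH] j w hw; first by rewrite addr0.
  have -> : (j + k.+1%:Z) = (j + k) + 1 by rewrite -addn1 PoszD addrA.
  by apply: gx; apply: IH.
have X0 : forall n, iter n (br x) 0 = 0.
  by elim=> [|n IH] //=; rewrite IH br0r.
have claim : forall k j w, rs (g j) w -> iter k.+1 (br x) (br y w) =
    br y (iter k.+1 (br x) w) + (k.+1%:R * c) *: iter k (br x) w.
  elim=> [|k IH] j w hw.
    by rewrite /= brJ xy (gT _ _ hw) mul1r addrC.
  have -> : iter k.+2 (br x) (br y w) = br x (iter k.+1 (br x) (br y w)) by [].
  rewrite (IH j w hw) brDr brZr brJ xy (gT _ _ (gi k.+1 j w hw)).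
  have -> : br x (iter k (br x) w) = iter k.+1 (br x) w by [].
  have -> : br x (iter k.+1 (br x) w) = iter k.+2 (br x) w by [].
  rewrite [c *: _ + _]addrC -addrA -scalerDl; congr (_ + _ *: _).
  by rewrite [in RHS]mulrSr mulrDl mul1r addrC.
have Ng : forall k, fH (g k) (g k) = fH b b + 2%:R * k%:~R * c.
  move=> k; rewrite /g fHDl !fHDr !fHZl !fHZr dd fHC -/c; ring.
have fdg : forall k, fH d (g k) = c by move=> k; rewrite /g fHDr fHZr dd mulr0 addr0.
have bound : forall k, is_root (g k) ->
    exists r : R, -1 <= r <= 1 /\ fH (g k) (g k) = 2%:R * c * r%:C.
  move=> k hk; case: (eqVneq (fH (g k) (g k)) 0) => h0.
    by exists 0; rewrite h0 mulr0; split => //; rewrite lerN10 ler01.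
  have [M [m e1]] := integrality (conj hk (elimN eqP h0)) hd.
  rewrite fdg in e1.
  set xr := (M%:R - 2%:R * m%:R : R).
  have ex : (M%:R - 2%:R * m%:R : C) = xr%:C by rewrite /xr rmorphB rmorphM /= !rmorph_nat.
  rewrite ex in e1.
  have xrn0 : xr != 0.
    apply/negP => /eqP x0; move: e1; rewrite x0 mul0r => /eqP; rewrite mulf_eq0 (negbTE cn0) orbF.
    by rewrite pnatr_eq0.
  exists xr^-1; split; first exact: inv_int_bound.
  rewrite fmorphV /= e1 mulrAC mulfV ?mul1r //.
  by apply/negP => /eqP /complexI /eqP; rewrite (negbTE xrn0).
have no3 : forall j, is_root (g j) -> is_root (g (j + 3)) -> False.
  move=> j h1 h2; have [r1 [b1 e1]] := bound _ h1; have [r2 [b2 e2]] := bound _ h2.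
  have : (2%:R * c) * (r2 - r1)%:C = (2%:R * c) * 3%:R.
    rewrite rmorphB /= mulrBr -e1 -e2 !Ng intrD; ring.
  move/mulfI; have c2 : 2%:R * c != 0 by rewrite mulf_eq0 (negbTE cn0) pnatr_eq0.
  move/(_ c2); rewrite -(rmorph_nat (real_complex R)) => /complexI.
  move: b1 b2 => /andP [b1 b1'] /andP [b2 b2'] e.
  suff : r2 - r1 < 3%:R by rewrite e ltxx.
  lra.
have P3 : forall j w, rs (g j) w -> iter 3 (br x) w = 0.
  move=> j w hw; apply: NNPP => /eqP h3.
  have wn0 : w != 0 by apply: contraNneq h3 => ->; rewrite X0.
  apply: (no3 j); first by exists w; split => //; apply/eqP.
  by exists (iter 3 (br x) w); split => //; [apply: gi | apply/eqP].
have step : forall n, (forall j w, rs (g j) w -> iter n.+1 (br x) w = 0) ->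
    forall j w, rs (g j) w -> iter n (br x) w = 0.
  move=> n Hn j w hw; have := claim n j w hw.
  rewrite (Hn _ _ (gy _ _ hw)) (Hn _ _ hw) br0r add0r => /esym /eqP.
  rewrite scaler_eq0 mulf_eq0 pnatr_eq0 (negbTE cn0) /= => /eqP //.
have P0 := step _ (step _ (step _ P3)).
case: hb => v [hv vn0]; apply: vn0; apply: (P0 0).
by rewrite /g scale0r addr0.
Qed.

Local Notation rspan := (@rspan R Hs).
Local Notation cspan := (@cspan R Hs).
Lemma rspan_ind (P Q : Hd -> Prop) : Q 0 -> (forall u v, Q u -> Q v -> Q (u + v)) ->
  (forall (r : R) a, P a -> Q (r%:C *: a)) -> forall v, rspan P v -> Q v.
Proof.
move=> Q0 QD QZ v [s [hs ->]]; elim: s hs => [|p s IH] hs; first by rewrite big_nil.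
rewrite big_cons; apply: QD; first by apply: QZ; apply: hs; rewrite mem_head.
by apply: IH => q qs; apply: hs; rewrite in_cons qs orbT.
Qed.
Lemma rspan0 P : rspan P 0.
Proof. by exists [::]; rewrite big_nil. Qed.
Lemma rspanD P u v : rspan P u -> rspan P v -> rspan P (u + v).
Proof.
case=> [s1 [h1 ->]] [s2 [h2 ->]]; exists (s1 ++ s2); rewrite big_cat; split => //.
by move=> p; rewrite mem_cat => /orP [] ?; [apply: h1 | apply: h2].
Qed.
Lemma rspanZ P (r : R) u : rspan P u -> rspan P (r%:C *: u).
Proof.
case=> [s [hs ->]]; exists [seq (r * p.1, p.2) | p <- s]; split.
  by move=> p /mapP [q qs ->]; exact: hs q qs.
rewrite big_map scaler_sumr; apply: eq_bigr => p _; by rewrite rmorphM scalerA.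
Qed.
Lemma rspanN P u : rspan P u -> rspan P (- u).
Proof. by move=> h; rewrite -scaleN1r -(rmorphN1 (real_complex R)); apply: rspanZ. Qed.
Lemma rspanB P u v : rspan P u -> rspan P v -> rspan P (u - v).
Proof. by move=> hu hv; apply: rspanD => //; apply: rspanN. Qed.
Lemma rspan1 (P : Hd -> Prop) a : P a -> rspan P a.
Proof. by move=> h; exists [:: (1, a)]; rewrite big_seq1 rmorph1 scale1r; split => // p; rewrite inE => /eqP ->. Qed.
Lemma rspan_sum P I (r : seq I) (F : I -> Hd) : (forall i, rspan P (F i)) -> rspan P (\sum_(i <- r) F i).
Proof. move=> h; elim: r => [|x r IH]; rewrite ?big_nil ?big_cons; [exact: rspan0 | exact: rspanD]. Qed.

Lemma cspan_ind (P : Hd -> Prop) (Q : Hs -> Prop) : Q 0 -> (forall u v, Q u -> Q v -> Q (u + v)) ->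
  (forall c a, P a -> Q (c *: t a)) -> forall v, cspan t P v -> Q v.
Proof.
move=> Q0 QD QZ v [s [hs ->]]; elim: s hs => [|p s IH] hs; first by rewrite big_nil.
rewrite big_cons; apply: QD; first by apply: QZ; apply: hs; rewrite mem_head.
by apply: IH => q qs; apply: hs; rewrite in_cons qs orbT.
Qed.
Lemma cspan0 P : cspan t P 0.
Proof. by exists [::]; rewrite big_nil. Qed.
Lemma cspanD P u v : cspan t P u -> cspan t P v -> cspan t P (u + v).
Proof.
case=> [s1 [h1 ->]] [s2 [h2 ->]]; exists (s1 ++ s2); rewrite big_cat; split => //.
by move=> p; rewrite mem_cat => /orP [] ?; [apply: h1 | apply: h2].
Qed.
Lemma cspanZ P c u : cspan t P u -> cspan t P (c *: u).
Proof.
case=> [s [hs ->]]; exists [seq (c * p.1, p.2) | p <- s]; split.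
  by move=> p /mapP [q qs ->]; exact: hs q qs.
rewrite big_map scaler_sumr; apply: eq_bigr => p _; by rewrite scalerA.
Qed.
Lemma cspanN P u : cspan t P u -> cspan t P (- u).
Proof. by move=> h; rewrite -scaleN1r; apply: cspanZ. Qed.
Lemma cspanB P u v : cspan t P u -> cspan t P v -> cspan t P (u - v).
Proof. by move=> hu hv; apply: cspanD => //; apply: cspanN. Qed.
Lemma cspan1 (P : Hd -> Prop) a : P a -> cspan t P (t a).
Proof. by move=> h; exists [:: (1, a)]; rewrite big_seq1 scale1r; split => // p; rewrite inE => /eqP ->. Qed.
Lemma cspan_sum P I (r : seq I) (F : I -> Hs) : (forall i, cspan t P (F i)) -> cspan t P (\sum_(i <- r) F i).
Proof. move=> h; elim: r => [|x r IH]; rewrite ?big_nil ?big_cons; [exact: cspan0 | exact: cspanD]. Qed.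
Lemma cspan_sub (P Q : Hd -> Prop) v : (forall a, P a -> Q a) -> cspan t P v -> cspan t Q v.
Proof. move=> PQ; elim/cspan_ind => // [|u w *|c a /PQ ?]; [exact: cspan0|exact: cspanD|exact/cspanZ/cspan1]. Qed.
Lemma rspan_sub (P Q : Hd -> Prop) v : (forall a, P a -> Q a) -> rspan P v -> rspan Q v.
Proof. move=> PQ; elim/rspan_ind => // [|u w *|c a /PQ ?]; [exact: rspan0|exact: rspanD|exact/rspanZ/rspan1]. Qed.

Local Notation Vsp := (Vsp br iota).
Local Notation V0 := (V0 br bf iota t).

Lemma root_Vsp a : is_root a -> Vsp a.
Proof. exact: rspan1. Qed.
Lemma V0_orth v w : V0 v -> Vsp w -> fH v w = 0.
Proof. by case=> _ h; apply: h. Qed.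
Lemma V0_orth' v w : V0 v -> Vsp w -> fH w v = 0.
Proof. by rewrite fHC; apply: V0_orth. Qed.
Lemma V0_0 : V0 0.
Proof. by split; [exact: rspan0 | move=> w _; rewrite fH0l]. Qed.
Lemma V0D u v : V0 u -> V0 v -> V0 (u + v).
Proof. case=> hu ou [hv ov]; split; first exact: rspanD.
by move=> w hw; rewrite fHDl ou // ov // addr0. Qed.
Lemma V0N u : V0 u -> V0 (- u).
Proof. case=> hu ou; split; first exact: rspanN.
by move=> w hw; rewrite fHNl ou // oppr0. Qed.
Lemma V0B u v : V0 u -> V0 v -> V0 (u - v).
Proof. by move=> hu hv; apply: V0D => //; apply: V0N. Qed.
Lemma Vsp_orth v : (forall b, is_root b -> fH v b = 0) -> forall w, Vsp w -> fH v w = 0.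
Proof.
move=> hb w hw; apply: (@rspan_ind is_root (fun w => fH v w = 0) _ _ _ w hw).
- by rewrite fH0r.
- by move=> u x hu hx; rewrite fHDr hu hx addr0.
- by move=> r a ha; rewrite fHZr hb // mulr0.
Qed.
Lemma iso_V0 d : is_root d -> fH d d = 0 -> V0 d.
Proof.
move=> hd dd; split; first exact: root_Vsp.
by apply: Vsp_orth => b hb; apply: iso_orth.
Qed.

Variables (k : nat) (cls : 'I_k -> Hd -> Prop) (ell : 'I_k -> nat)
  (al : forall i : 'I_k, 'I_(ell i) -> Hd).
Arguments al : clear implicits.
Variable Hpart : root_partition br bf iota t cls.
Variable Hbase : forall i, is_base br bf iota t (cls i) (al i).

Lemma cls_Rx i a : cls i a -> Rx a.
Proof. by case: Hpart => _ h _ _ _; apply: h. Qed.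
Lemma cls_exists a : Rx a -> exists i, cls i a.
Proof. by case: Hpart => _ _ h _ _; apply: h. Qed.
Lemma cls_uniq i j a : cls i a -> cls j a -> i = j.
Proof. by case: Hpart => _ _ _ _ h; apply: h. Qed.
Lemma cls_step i a b : cls i a -> Rx b -> fH a b != 0 -> cls i b.
Proof.
case: Hpart => _ _ _ h _ ha hb hab; have [_] := h i a b ha; apply; apply: rt_step.
by split => //; [apply: cls_Rx ha | apply/eqP].
Qed.
Lemma cls_orth i j a b : cls i a -> cls j b -> i != j -> fH a b = 0.
Proof.
move=> ha hb ij; apply: NNPP => /eqP hn; move/eqP: ij; apply.
by apply: (cls_uniq (cls_step ha (cls_Rx hb) hn)).
Qed.
Lemma al_cls i j : cls i (al i j).
Proof. by case: (Hbase i) => h _ _; apply: h. Qed.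
Lemma al_Rx i j : Rx (al i j).
Proof. exact: cls_Rx (al_cls j). Qed.
Lemma al_root i j : is_root (al i j).
Proof. by case: (al_Rx j). Qed.
Lemma base_indep i (r : 'I_(ell i) -> R) : V0 (\sum_j (r j)%:C *: al i j) -> forall j, r j = 0.
Proof. by case: (Hbase i) => _ h _; apply: h. Qed.
Lemma base_expr i b : cls i b -> exists z : 'I_(ell i) -> int,
        ((forall j, (0 <= z j)%R) \/ (forall j, (z j <= 0)%R)) /\
        V0 (b - \sum_j ((z j)%:~R *: al i j)).
Proof. by case: (Hbase i) => _ _ h; apply: h. Qed.

Lemma natdC (M m : nat) : (M%:R - 2%:R * m%:R : C) = (M%:R - 2%:R * m%:R : R)%:C.
Proof. by rewrite rmorphB rmorphM /= !rmorph_nat. Qed.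

Lemma integrality_R a b : Rx a -> is_root b ->
  exists n : R, 2%:R * fH b a = n%:C * fH a a.
Proof. by move=> ha hb; have [M [m e]] := integrality ha hb; exists (M%:R - 2%:R * m%:R); rewrite -natdC. Qed.

Lemma norm_ratio a b : rootequiv br bf iota t a b -> Rx a -> Rx b /\ exists r : R, fH b b = r%:C * fH a a.
Proof.
elim=> {a b} [x y [hx hy hxy] _|x hx|x y z _ IH1 _ IH2 hx].
- split => //; have [n1 e1] := integrality_R hx (proj1 hy).
  have [n2 e2] := integrality_R hy (proj1 hx).
  have n2n0 : n2 != 0.
    apply/negP => /eqP n0; move: e2; rewrite n0 rmorph0 mul0r => /eqP.
    by rewrite mulf_eq0 pnatr_eq0 /= => /eqP.
  have n2C : n2%:C != 0 by apply/negP => /eqP /complexI /eqP; rewrite (negbTE n2n0).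
  have e : n2%:C * fH y y = n1%:C * fH x x by rewrite -e2 -e1 fHC.
  exists (n1 / n2); rewrite rmorphM fmorphV /=; apply: (mulfI n2C); rewrite e.
  by field.
- by split => //; exists 1; rewrite rmorph1 mul1r.
- have [hy [r1 e1]] := IH1 hx; have [hz [r2 e2]] := IH2 hy.
  by split => //; exists (r2 * r1); rewrite e2 e1 rmorphM mulrA.
Qed.

Lemma cls_real i a0 a b : cls i a0 -> cls i a -> cls i b -> exists r : R, fH a b = r%:C * fH a0 a0.
Proof.
move=> h0 ha hb.
have eq0 : rootequiv br bf iota t a0 a by case: Hpart => _ _ _ h _; have [h1 _] := h i a0 a h0; apply: h1.
have [_ [r1 e1]] := norm_ratio eq0 (cls_Rx h0).
have [n e] := integrality_R (cls_Rx ha) (proj1 (cls_Rx hb)).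
exists (n / 2%:R * r1).
have -> : fH a b = n%:C / 2%:R * fH a a.
  apply: (@mulfI _ 2%:R); first by rewrite pnatr_eq0.
  by rewrite fHC e; field.
by rewrite e1 !rmorphM fmorphV /= rmorph_nat mulrA.
Qed.

Lemma ReD (x y : C) : complex.Re (x + y) = complex.Re x + complex.Re y.
Proof. by case: x => ??; case: y. Qed.
Lemma ImD (x y : C) : complex.Im (x + y) = complex.Im x + complex.Im y.
Proof. by case: x => ??; case: y. Qed.
Lemma ReMr (x : C) (r : R) : complex.Re (x * r%:C) = complex.Re x * r.
Proof. case: x => a b /=; ring. Qed.
Lemma ImMr (x : C) (r : R) : complex.Im (x * r%:C) = complex.Im x * r.
Proof. case: x => a b /=; ring. Qed.
Lemma Re_sum I (r : seq I) (F : I -> C) : complex.Re (\sum_(i <- r) F i) = \sum_(i <- r) complex.Re (F i).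
Proof. elim: r => [|x r IH]; rewrite ?big_nil // !big_cons ReD IH //. Qed.
Lemma Im_sum I (r : seq I) (F : I -> C) : complex.Im (\sum_(i <- r) F i) = \sum_(i <- r) complex.Im (F i).
Proof. elim: r => [|x r IH]; rewrite ?big_nil // !big_cons ImD IH //. Qed.

Lemma al_Vsp i j : Vsp (al i j).
Proof. exact/root_Vsp/al_root. Qed.
Lemma comb_Vsp i (r : 'I_(ell i) -> R) : Vsp (\sum_j (r j)%:C *: al i j).
Proof. by apply: rspan_sum => j; apply/rspanZ/al_Vsp. Qed.
Lemma fH_comb_l i (a : 'I_(ell i) -> C) b : fH (\sum_j a j *: al i j) b = \sum_j a j * fH (al i j) b.
Proof. by rewrite fH_suml; apply: eq_bigr => j _; rewrite fHZl. Qed.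

Lemma V0_crit i (r : 'I_(ell i) -> R) :
  (forall k', fH (\sum_j (r j)%:C *: al i j) (al i k') = 0) -> V0 (\sum_j (r j)%:C *: al i j).
Proof.
move=> hk; split; first exact: comb_Vsp.
apply: Vsp_orth => b hb.
case: (eqVneq (fH b b) 0) => [bb|bn0].
  rewrite fH_comb_l big1 // => j _; by rewrite fHC (iso_orth hb bb (al_root j)) mulr0.
have hRb : Rx b by split => //; apply/eqP.
have [i' hi'] := cls_exists hRb.
case: (eqVneq i' i) => [ei|ni].
  rewrite ei in hi'; have [z [_ hz]] := base_expr hi'.
  have -> : b = (b - \sum_j (z j)%:~R *: al i j) + \sum_j (z j)%:~R *: al i j by rewrite subrK.
  rewrite fHDr (V0_orth' hz (comb_Vsp _)) add0r fH_sumr big1 // => j _.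
  by rewrite fHZr hk mulr0.
rewrite fH_comb_l big1 // => j _; by rewrite (cls_orth (al_cls j) hi') ?mulr0 // eq_sym.
Qed.

Lemma dot_nondeg i (a : 'I_(ell i) -> C) :
  (forall k', fH (\sum_j a j *: al i j) (al i k') = 0) -> forall j, a j = 0.
Proof.
move=> hk j0; set N0 := fH (al i j0) (al i j0).
have N0n0 : N0 != 0 by case: (al_Rx j0) => _ /eqP.
have /fin_all_exists [q hq] : forall j, exists qj : 'I_(ell i) -> R, forall k', fH (al i j) (al i k') = (qj k')%:C * N0.
  move=> j; have /fin_all_exists : forall k', exists r : R, fH (al i j) (al i k') = r%:C * N0.
    by move=> k'; exact: cls_real (al_cls j0) (al_cls j) (al_cls k').
  by [].
have hsum : forall k', \sum_j a j * (q j k')%:C = 0.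
  move=> k'; apply: (@mulIf _ N0) => //; rewrite mul0r mulr_suml -[RHS](hk k') fH_comb_l.
  by apply: eq_bigr => j _; rewrite hq mulrA.
have indep : forall r : 'I_(ell i) -> R, (forall k', \sum_j r j * q j k' = 0) -> forall j, r j = 0.
  move=> r hr; apply: base_indep; apply: V0_crit => k'.
  rewrite fH_comb_l (eq_bigr (fun j => ((r j * q j k')%:C) * N0)).
    by rewrite -mulr_suml -rmorph_sum /= hr rmorph0 mul0r.
  by move=> j _; rewrite hq rmorphM mulrA.
have hre := indep (fun j => complex.Re (a j)).
have him := indep (fun j => complex.Im (a j)).
rewrite (complexE (a j0)) hre ?him ?mulr0 ?addr0 //.
  move=> k'; have e := congr1 (@complex.Im R) (hsum k'); rewrite Im_sum /= in e; rewrite -[RHS]e.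
  by apply: eq_bigr => j _; rewrite ImMr.
move=> k'; have e := congr1 (@complex.Re R) (hsum k'); rewrite Re_sum /= in e; rewrite -[RHS]e.
by apply: eq_bigr => j _; rewrite ReMr.
Qed.

Local Notation dotR i := (dotR br bf iota t (cls i) (al i)).
Local Notation dotH i := (dotH br bf iota t (cls i) (al i)).
Local Notation HR := (HR br iota t).
Local Notation H0R := (H0R br bf iota t).

Lemma comb_delta i (j : 'I_(ell i)) (c : C) :
  \sum_j' ((j' == j)%:R * c) *: al i j' = c *: al i j.
Proof.
rewrite (bigD1 j) //= eqxx mul1r big1 ?addr0 // => j' /negbTE ->; by rewrite mul0r scale0r.
Qed.

Lemma dotR_span i b : dotR i b -> exists a : 'I_(ell i) -> C, b = \sum_j a j *: al i j.
Proof.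
case=> hb _; apply: (@rspan_ind _ (fun b => exists a : 'I_(ell i) -> C, b = \sum_j a j *: al i j) _ _ _ b hb).
- by exists (fun _ => 0); rewrite big1 // => j _; rewrite scale0r.
- move=> u v [a1 ->] [a2 ->]; exists (fun j => a1 j + a2 j).
  by rewrite -big_split; apply: eq_bigr => j _; rewrite scalerDl.
- move=> r a [j ->]; exists (fun j' => (j' == j)%:R * r%:C); by rewrite comb_delta.
Qed.

Lemma dotH_span i h : dotH i h -> exists a : 'I_(ell i) -> C, h = t (\sum_j a j *: al i j).
Proof.
move=> hh; apply: (@cspan_ind _ (fun h => exists a : 'I_(ell i) -> C, h = t (\sum_j a j *: al i j)) _ _ _ h hh).
- by exists (fun _ => 0); rewrite big1 ?t0 // => j _; rewrite scale0r.
- move=> u v [a1 ->] [a2 ->]; exists (fun j => a1 j + a2 j).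
  by rewrite -tD -big_split; congr t; apply: eq_bigr => j _; rewrite scalerDl.
- move=> c b /dotR_span [a ->]; exists (fun j => c * a j).
  by rewrite -tZ scaler_sumr; congr t; apply: eq_bigr => j _; rewrite scalerA.
Qed.

Lemma al_dotR i j : dotR i (al i j).
Proof.
split; first by apply: rspan1; exists j.
by right; exists (al i j); split; [apply: al_cls | rewrite subrr; apply: V0_0].
Qed.

Lemma dotH_comb i (a : 'I_(ell i) -> C) : dotH i (t (\sum_j a j *: al i j)).
Proof. rewrite t_sum; apply: cspan_sum => j; rewrite tZ; apply/cspanZ/cspan1/al_dotR. Qed.

Lemma HR_t a : is_root a -> HR (t a).
Proof. exact: cspan1. Qed.

Lemma dotH_HR i h : dotH i h -> HR h.
Proof.
case/dotH_span => a ->; rewrite t_sum; apply: cspan_sum => j; rewrite tZ.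
exact/cspanZ/HR_t/al_root.
Qed.

Lemma bf_t a b : bf (iota (t a)) (iota (t b)) = fH a b.
Proof. by []. Qed.

Lemma part_i i h : dotH i h -> (forall h', dotH i h' -> bf (iota h) (iota h') = 0) -> h = 0.
Proof.
case/dotH_span => a -> horth.
have ha := dot_nondeg (a := a) (fun k' => horth _ (cspan1 (al_dotR k'))).
by rewrite big1 ?t0 // => j _; rewrite ha scale0r.
Qed.

Lemma HR_orth h : (forall b, is_root b -> bf (iota h) (iota (t b)) = 0) ->
  forall h', HR h' -> bf (iota h) (iota h') = 0.
Proof.
move=> hb h' hh; apply: (@cspan_ind _ (fun h' => bf (iota h) (iota h') = 0) _ _ _ h' hh).
- by rewrite linear0 bf0r.
- by move=> u v hu hv; rewrite linearD bfDr hu hv addr0.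
- by move=> c a ha; rewrite linearZ bfZr hb // mulr0.
Qed.
Lemma H0R_0 : H0R 0.
Proof. by split; [exact: cspan0 | move=> h' _; rewrite linear0 bf0l]. Qed.
Lemma H0RD u v : H0R u -> H0R v -> H0R (u + v).
Proof. case=> hu ou [hv ov]; split; first exact: cspanD.
by move=> h' hh; rewrite linearD bfDl ou // ov // addr0. Qed.
Lemma H0RZ c u : H0R u -> H0R (c *: u).
Proof. case=> hu ou; split; first exact: cspanZ.
by move=> h' hh; rewrite linearZ bfZl ou // mulr0. Qed.
Lemma H0RN u : H0R u -> H0R (- u).
Proof. by move=> h; rewrite -scaleN1r; apply: H0RZ. Qed.
Lemma Vsp_HR v : Vsp v -> HR (t v).
Proof.
move=> hv; apply: (@rspan_ind _ (fun v => HR (t v)) _ _ _ v hv).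
- by rewrite t0; apply: cspan0.
- by move=> u w hu hw; rewrite tD; apply: cspanD.
- by move=> r a ha; rewrite tZ; apply/cspanZ/HR_t.
Qed.
Lemma V0_H0R v : V0 v -> H0R (t v).
Proof.
move=> hv; split; first by apply: Vsp_HR; case: hv.
by apply: HR_orth => b hb; rewrite bf_t; apply: V0_orth hv (root_Vsp hb).
Qed.
Lemma R0_H0R d : R0 br bf iota t d -> H0R (t d).
Proof. by case=> hd dd; apply/V0_H0R/iso_V0. Qed.
Lemma cspanR0_H0R h : cspan t (R0 br bf iota t) h -> H0R h.
Proof.
move=> hh; apply: (@cspan_ind _ H0R _ _ _ h hh).
- exact: H0R_0.
- exact: H0RD.
- by move=> c a ha; apply/H0RZ/R0_H0R.
Qed.

Lemma cross_orth i i' x y : i' != i -> dotH i' x -> dotH i y -> bf (iota x) (iota y) = 0.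
Proof.
move=> ne /dotH_span [a ->] /dotH_span [b ->]; rewrite bf_t fH_comb_l big1 // => j _.
rewrite fH_sumr big1 ?mulr0 // => j' _; by rewrite fHZr (cls_orth (al_cls j) (al_cls j') ne) mulr0.
Qed.

Lemma uniq_dec h0 (hs : 'I_k -> Hs) : H0R h0 -> (forall i, dotH i (hs i)) ->
  h0 + \sum_i hs i = 0 -> h0 = 0 /\ (forall i, hs i = 0).
Proof.
move=> h0R hd e.
have hz : forall i, hs i = 0.
  move=> i; apply: (part_i (hd i)) => h' hh'.
  have := congr1 (fun x => bf (iota x) (iota h')) e; rewrite /= linear0 bf0l.
  rewrite linearD bfDl (proj2 h0R _ (dotH_HR hh')) add0r linear_sum bf_suml (bigD1 i) //=.
  by rewrite big1 ?addr0 // => i' ne; apply: cross_orth (hd i') hh'.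
split => //; move: e; rewrite big1 ?addr0 // => i _; exact: hz.
Qed.

Local Notation R0 := (R0 br bf iota t).

Lemma step_height i b (z : 'I_(ell i) -> int) : cls i b -> (forall j, 0 <= z j) ->
  V0 (b - \sum_j (z j)%:~R *: al i j) -> exists j, 0 < z j /\ is_root (b - al i j).
Proof.
move=> hb zpos hu; have hRb := cls_Rx hb.
have Nb0 : fH b b != 0 by case: hRb => _ /eqP.
have /fin_all_exists [n hn] : forall j, exists r : R, 2%:R * fH (al i j) b = r%:C * fH b b.
  by move=> j; apply: integrality_R hRb (al_root j).
have sumeq : fH b b = \sum_j (z j)%:~R * fH b (al i j).
  have -> : fH b b = fH b ((b - \sum_j (z j)%:~R *: al i j) + \sum_j (z j)%:~R *: al i j) by rewrite subrK.
  rewrite fHDr (V0_orth' hu (root_Vsp (proj1 hRb))) add0r fH_sumr.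
  by apply: eq_bigr => j _; rewrite fHZr.
have sum2 : (2%:R : R) = \sum_j (z j)%:~R * n j.
  apply: complexI; rewrite rmorph_sum rmorph_nat /=; apply: (@mulIf _ (fH b b)) => //.
  rewrite {1}sumeq mulr_sumr mulr_suml; apply: eq_bigr => j _.
  by rewrite rmorphM /= rmorph_int mulrCA fHC hn mulrA.
apply: NNPP => hno.
have hle : forall j, (z j)%:~R * n j <= 0.
  move=> j; case: (ltrP 0 (z j)) => hz; last first.
    have -> : z j = 0 by apply/eqP; rewrite eq_le hz zpos.
    by rewrite mul0r.
  apply: mulr_ge0_le0; first by rewrite ler0z.
  rewrite leNgt; apply/negP => npos; apply: hno; exists j; split => //.
  rewrite -opprB; apply: rootN; apply: one_step hRb (al_root j) _ => K.
  rewrite hn; apply/negP => /eqP /(mulIf Nb0).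
  rewrite -(rmorph_nat (real_complex R)) -rmorphN => /complexI en; move: npos; rewrite en oppr_gt0 ltNge.
  by rewrite ler0n.
have : \sum_j (z j)%:~R * n j <= (0 : R) by apply: sumr_le0 => j _; apply: hle.
by rewrite -sum2; lra.
Qed.

Lemma height i n : forall b (z : 'I_(ell i) -> int), cls i b -> (forall j, 0 <= z j) ->
  \sum_j z j = n%:Z -> V0 (b - \sum_j (z j)%:~R *: al i j) ->
  cspan t R0 (t (b - \sum_j (z j)%:~R *: al i j)).
Proof.
elim: n => [|n IH] b z hb zpos hsum hu; have [j [zj hr]] := step_height hb zpos hu.
  have : z j <= \sum_j z j by rewrite (bigD1 j) //= lerDl sumr_ge0.
  by rewrite hsum leNgt zj.
pose z' := fun j' => if j' == j then z j - 1 else z j'.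
have ez : \sum_j' (z' j')%:~R *: al i j' = \sum_j' (z j')%:~R *: al i j' - al i j.
  rewrite (bigD1 j) //= [in RHS](bigD1 j) //= /z' eqxx intrB mulr1z scalerBl scale1r.
  rewrite addrAC; congr (_ + _ - _); apply: eq_bigr => j' /negbTE -> //.
have ezs : \sum_j' z' j' = n%:Z.
  have e1 : \sum_j' z' j' = \sum_j' z j' - 1.
    rewrite (bigD1 j) //= [in RHS](bigD1 j) //= /z' eqxx [RHS]addrAC; congr (_ + _).
    by apply: eq_bigr => j' /negbTE ->.
  by rewrite e1 hsum -[n.+1]addn1 PoszD addrK.
have z'pos : forall j', 0 <= z' j'.
  by move=> j'; rewrite /z'; case: eqP => _ //; rewrite subr_ge0.
have eu : b - \sum_j (z j)%:~R *: al i j = (b - al i j) - \sum_j' (z' j')%:~R *: al i j'.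
  by rewrite ez opprB addrA subrK.
rewrite eu; rewrite eu in hu.
case: (eqVneq (fH (b - al i j) (b - al i j)) 0) => [g0|gn0].
  have hV : V0 (\sum_j' ((z' j')%:~R : R)%:C *: al i j').
    have -> : \sum_j' ((z' j')%:~R : R)%:C *: al i j' = (b - al i j) - ((b - al i j) - \sum_j' (z' j')%:~R *: al i j').
      rewrite opprB addrC subrK; apply: eq_bigr => j' _; by rewrite rmorph_int.
    by apply: V0B => //; apply: iso_V0.
  have z0 := base_indep hV.
  rewrite big1 ?subr0; first by apply: cspan1; split.
  by move=> j' _; rewrite -(rmorph_int (real_complex R)) z0 rmorph0 scale0r.
have hRg : Rx (b - al i j) by split => //; apply/eqP.
have [k' hk'] : exists k', fH (al i k') (b - al i j) != 0.
  apply: NNPP => hn; move/eqP: gn0; apply.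
  have -> : fH (b - al i j) (b - al i j) = fH (b - al i j) (((b - al i j) - \sum_j' (z' j')%:~R *: al i j') + \sum_j' (z' j')%:~R *: al i j') by rewrite subrK.
  rewrite fHDr (V0_orth' hu (root_Vsp hr)) add0r fH_sumr big1 // => j' _.
  rewrite fHZr fHC; case: (eqVneq (fH (al i j') (b - al i j)) 0) => [->|hne]; first by rewrite mulr0.
  by case: hn; exists j'.
have hg : cls i (b - al i j) := cls_step (al_cls k') hRg hk'.
exact: IH hg z'pos ezs hu.
Qed.

Lemma lift_R0 i b : cls i b -> exists z : 'I_(ell i) -> int,
  V0 (b - \sum_j (z j)%:~R *: al i j) /\ cspan t R0 (t (b - \sum_j (z j)%:~R *: al i j)).
Proof.
move=> hb; have [z [[zpos|zneg] hu]] := base_expr hb; exists z; split => //.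
  have : 0 <= \sum_j z j by apply: sumr_ge0.
  case E : (\sum_j z j) => [n|n] // _; exact: height hb zpos E hu.
have Nb0 : fH b b != 0 by case: (cls_Rx hb) => _ /eqP.
have hb' : cls i (- b).
  by apply: (cls_step hb (RxN (cls_Rx hb))); rewrite fHNr oppr_eq0.
have zpos : forall j, 0 <= - z j by move=> j; rewrite oppr_ge0.
have eqn : - b - \sum_j (- z j)%:~R *: al i j = - (b - \sum_j (z j)%:~R *: al i j).
  rewrite opprB addrC -sumrN; congr (_ - _); apply: eq_bigr => j _; by rewrite intrN scaleNr opprK.
have hu' : V0 (- b - \sum_j (- z j)%:~R *: al i j) by rewrite eqn; exact: V0N.
have : 0 <= \sum_j - z j by apply: sumr_ge0.
case E : (\sum_j - z j) => [n|n] // _; have := height hb' zpos E hu'.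
rewrite eqn; by rewrite tN => /cspanN; rewrite opprK.
Qed.

Lemma decomp_HR h : HR h -> exists u (hs : 'I_k -> Hs),
  [/\ cspan t R0 u, forall i, dotH i (hs i) & h = u + \sum_i hs i].
Proof.
move=> hh; apply: (@cspan_ind _ (fun h => exists u (hs : 'I_k -> Hs),
  [/\ cspan t R0 u, forall i, dotH i (hs i) & h = u + \sum_i hs i]) _ _ _ h hh).
- exists 0, (fun _ => 0); split; [exact: cspan0 | move=> i; exact: cspan0 |].
  by rewrite big1 // addr0.
- move=> x y [u1 [hs1 [c1 d1 e1]]] [u2 [hs2 [c2 d2 e2]]].
  exists (u1 + u2), (fun i => hs1 i + hs2 i); split; first exact: cspanD.
    by move=> i; apply: cspanD (d1 i) (d2 i).
  by rewrite e1 e2 big_split /= addrACA.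
- move=> c b hb; case: (eqVneq (fH b b) 0) => [bb|bn0].
    exists (c *: t b), (fun _ => 0); split.
    + by apply/cspanZ/cspan1.
    + by move=> i; exact: cspan0.
    + by rewrite big1 // addr0.
  have [i hi] := cls_exists (conj hb (elimN eqP bn0)).
  have [z [hu hc]] := lift_R0 hi.
  exists (c *: t (b - \sum_j (z j)%:~R *: al i j)),
    (fun i' => if i' == i then c *: t (\sum_j (z j)%:~R *: al i j) else 0); split.
  + exact: cspanZ.
  + move=> i'; case: eqP => [->|_]; last exact: cspan0.
    by apply/cspanZ/dotH_comb.
  + set X := c *: t (\sum_j (z j)%:~R *: al i j).
    have -> : \sum_i' (if i' == i then X else 0) = X.
      rewrite (bigD1 i) //= eqxx [X in _ + X = _]big1 ?addr0 => // i' /negbTE ->.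
      by [].
    by rewrite /X -scalerDr -tD subrK.
Qed.

Lemma main :
  (forall i h, dotH i h -> (forall h', dotH i h' -> bf (iota h) (iota h') = 0) -> h = 0)
  /\
  [/\ forall h, H0R h -> HR h,
      forall i h, dotH i h -> HR h,
      forall h, HR h ->
        exists (h0 : Hs) (hs : 'I_k -> Hs),
          [/\ H0R h0, forall i, dotH i (hs i) & h = h0 + \sum_i hs i] &
      forall (h0 : Hs) (hs : 'I_k -> Hs),
        H0R h0 -> (forall i, dotH i (hs i)) ->
        h0 + \sum_i hs i = 0 -> h0 = 0 /\ (forall i, hs i = 0)]
  /\
  (forall h, H0R h <-> cspan t R0 h).
Proof.
split; first by move=> i h; apply: part_i.
split; first split.
- by move=> h [].
- by move=> i h; apply: dotH_HR.
- move=> h /decomp_HR [u [hs [hu hd e]]]; exists u, hs; split => //; exact: cspanR0_H0R.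
- exact: uniq_dec.
move=> h; split; last exact: cspanR0_H0R.
move=> h0R; have [u [hs [hu hd e]]] := decomp_HR (proj1 h0R).
have := @uniq_dec (u - h) hs (H0RD (cspanR0_H0R hu) (H0RN h0R)) hd.
rewrite addrAC -e subrr => /(_ erefl) [_ hz].
by rewrite e big1 ?addr0.
Qed.
End Basics.

Unset Implicit Arguments.

Theorem lemma2p4 (R : realType) (V : lmodType R[i]) (Hs : vectType R[i])
  (br : V -> V -> V) (bf : V -> V -> R[i]) (iota : {linear Hs -> V})
  (t : 'Hom(Hs, R[i]^o) -> Hs)
  (k : nat) (cls : 'I_k -> 'Hom(Hs, R[i]^o) -> Prop)
  (ell : 'I_k -> nat) (al : forall i : 'I_k, 'I_(ell i) -> 'Hom(Hs, R[i]^o)) :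
  GRLA br bf iota t ->
  is_t bf iota t ->
  root_partition br bf iota t cls ->
  (forall i, is_base br bf iota t (cls i) (al i)) ->
  (* (i) *)
  (forall i h, dotH br bf iota t (cls i) (al i) h ->
     (forall h', dotH br bf iota t (cls i) (al i) h' -> bf (iota h) (iota h') = 0) ->
     h = 0)
  /\
  (* (ii) H(R) = H^0(R) (+) (+)_i dot H_i  (internal direct sum) *)
  [/\ forall h, H0R br bf iota t h -> HR br iota t h,
      forall i h, dotH br bf iota t (cls i) (al i) h -> HR br iota t h,
      forall h, HR br iota t h ->
        exists (h0 : Hs) (hs : 'I_k -> Hs),
          [/\ H0R br bf iota t h0,
              forall i, dotH br bf iota t (cls i) (al i) (hs i) &
              h = h0 + \sum_i hs i] &
      forall (h0 : Hs) (hs : 'I_k -> Hs),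
        H0R br bf iota t h0 ->
        (forall i, dotH br bf iota t (cls i) (al i) (hs i)) ->
        h0 + \sum_i hs i = 0 -> h0 = 0 /\ (forall i, hs i = 0)]
  /\
  (* (iii) *)
  (forall h, H0R br bf iota t h <-> cspan t (R0 br bf iota t) h).
Proof.
move=> [Hl HG1 HG2 HG3 [_ _]] Ht Hp Hb.
exact: (@main R V Hs br bf iota t Hl HG1 HG2 Ht HG3 k cls ell al Hp Hb).
Qed.
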